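(* Let $H$ be a separable complex Hilbert space and $X$ a locally compact space with positive Borel measure $\mu$; give $F$, $F_0$, $\overline{F}_0$, $F_1$ the topology of the norm $\|f\|_J=\sup_{x\in X}\|f(x)\|_H$ and $\operatorname{GL}(H)$ the operator norm topology. If $\zeta^{-1}$ is continuous, then $\theta_*:F_1\times\overline{F}_0\to F$ is a homeomorphism and $F$ is a principal fiber bundle with base space $\overline{F}_0$, fiber $F_1$, and structure group $\operatorname{GL}(H)$.
   Context: A frame on $H$ is a map $f:X\to H$ such that $x\mapsto\langle\phi,f(x)\rangle$ is measurable for every $\phi\in H$ and there exist $0<A\le B$ with $A\|\phi\|^2\le\int_X|\langle\phi,f(x)\rangle|^2d\mu(x)\le B\|\phi\|^2$ for all $\phi$; it is Parseval if $A=B=1$. $\operatorname{GL}(H)$ is the group of bounded invertible operators with bounded inverse, $U(H)$ the unitary group. $F$ is the set of frames $f$ with $\|f\|_J<\infty$, $F_0$ the Parseval ones. $(Af)(x)=A[f(x)]$. $\overline{F}_0\subset F_0$ is a fixed transversal of $F_0/U(H)$ (exactly one element from each orbit $\{Vf:V\in U(H)\}$). The map $\zeta:\operatorname{GL}(H)\times\overline{F}_0\to F$, $\zeta(A,f)=Af$, is a bijection; $\pi_1$ is projection onto the $\operatorname{GL}(H)$ factor. Fix $f_{10}\in\overline{F}_0$, let $F_1=\{Af_{10}:A\in\operatorname{GL}(H)\}$, $\theta:F_1\to\operatorname{GL}(H)$, $\theta(f)=\pi_1(\zeta^{-1}(f))$, and $\theta_*(f_1,f_0)=\zeta(\theta(f_1),f_0)$.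 A topological space $E$ is a fiber bundle with base space $B$ and fiber $E_1$ if there is a continuous surjection $\pi:E\to B$ such that each point of $E$ has a neighborhood $W\subseteq B$ of its image and a homeomorphism $\vartheta:\pi^{-1}(W)\to W\times E_1$ with $\pi=\pi_W\circ\vartheta$ on $\pi^{-1}(W)$; it is principal with structure group $G$ if $E_1$ is a principal homogeneous space under an action of $G$. *)

(* Defs.v *)
From HB Require Import structures.
From mathcomp Require Import all_boot all_order all_algebra.
From mathcomp Require Import all_classical all_reals all_analysis.
From mathcomp Require Import complex.
Set Implicit Arguments. Unset Strict Implicit. Unset Printing Implicit Defensive.
Import Order.TTheory GRing.Theory Num.Theory.
Local Open Scope classical_set_scope.
Local Open Scope ring_scope.

Section Hilbert.
Variables (R : realType) (V : lmodType R[i]) (ip : V -> V -> R[i]).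

Definition hnorm (x : V) : R := Num.sqrt (complex.Re (ip x x)).

Definition is_inner_product : Prop :=
  [/\ (forall (a : R[i]) (x y z : V), ip (a *: x + y) z = a * ip x z + ip y z),
      (forall x y : V, ip y x = conjc (ip x y)),
      (forall x : V, 0 <= complex.Re (ip x x)) &
      (forall x : V, ip x x = 0 -> x = 0)].

Definition hcomplete : Prop :=
  forall u : nat -> V,
    (forall e : R, 0 < e -> exists N : nat, forall m n : nat,
        (N <= m)%N -> (N <= n)%N -> hnorm (u m - u n) < e) ->
    exists l : V, forall e : R, 0 < e -> exists N : nat, forall n : nat,
        (N <= n)%N -> hnorm (u n - l) < e.

Definition hseparable : Prop :=
  exists s : nat -> V, forall (x : V) (e : R), 0 < e -> exists n : nat, hnorm (x - s n) < e.

Definition separable_hilbert : Prop := [/\ is_inner_product, hcomplete & hseparable].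

Definition is_linear_op (A : V -> V) : Prop :=
  forall (a : R[i]) (x y : V), A (a *: x + y) = a *: A x + A y.

Definition bounded_op (A : V -> V) : Prop :=
  is_linear_op A /\ exists M : R, forall x : V, hnorm (A x) <= M * hnorm x.

Definition GLH : set (V -> V) :=
  [set A | bounded_op A /\ exists B : V -> V, [/\ bounded_op B, cancel A B & cancel B A]].

Definition unitary : set (V -> V) :=
  [set U | [/\ is_linear_op U, (forall y : V, exists x : V, U x = y) & forall x y : V, ip (U x) (U y) = ip x y]].

Definition opnorm (A : V -> V) : R := sup [set hnorm (A x) | x in [set x | hnorm x <= 1]].

Definition op_dist (A B : V -> V) : \bar R := (opnorm (fun x => A x - B x))%:E.

Variables (X : ptopologicalType)
  (mu : {measure set (g_sigma_algebraType (@open X)) -> \bar R}).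

Definition weakly_measurable (f : X -> V) : Prop :=
  forall phi : V,
    measurable_fun (setT : set (g_sigma_algebraType (@open X))) (fun x => complex.Re (ip phi (f x))) /\
    measurable_fun (setT : set (g_sigma_algebraType (@open X))) (fun x => complex.Im (ip phi (f x))).

Definition frame_integral (f : X -> V) (phi : V) : \bar R :=
  \int[mu]_(x in (setT : set (g_sigma_algebraType (@open X)))) (complex.Re (ip phi (f x)) ^+ 2 + complex.Im (ip phi (f x)) ^+ 2)%:E.

Definition is_frame (f : X -> V) : Prop :=
  weakly_measurable f /\
  exists A B : R, [/\ 0 < A, A <= B &
    forall phi : V, ((A * hnorm phi ^+ 2)%:E <= frame_integral f phi)%E /\
                    (frame_integral f phi <= (B * hnorm phi ^+ 2)%:E)%E].

Definition is_parseval (f : X -> V) : Prop :=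
  weakly_measurable f /\
  forall phi : V, ((hnorm phi ^+ 2)%:E <= frame_integral f phi)%E /\
                  (frame_integral f phi <= (hnorm phi ^+ 2)%:E)%E.

Definition norm_J (f : X -> V) : \bar R := ereal_sup (range (fun x => (hnorm (f x))%:E)).
Definition distJ (f g : X -> V) : \bar R := norm_J (fun x => f x - g x).

Definition Fset : set (X -> V) := [set f | is_frame f /\ (norm_J f < +oo)%E].
Definition F0set : set (X -> V) := [set f | is_parseval f /\ (norm_J f < +oo)%E].

Definition opact (A : V -> V) (f : X -> V) : X -> V := fun x => A (f x).

Definition is_F0_transversal (Fb0 : set (X -> V)) : Prop :=
  Fb0 `<=` F0set /\
  forall f, F0set f -> exists g, [/\ Fb0 g, (exists2 U, unitary U & g = opact U f) &
      forall g', Fb0 g' -> (exists2 U, unitary U & g' = opact U f) -> g' = g].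

End Hilbert.

Section Topo.
Variable R : realType.

Definition metric_open {T : Type} (d : T -> T -> \bar R) (S : set T) (U : set T) : Prop :=
  U `<=` S /\ forall u, U u -> exists2 e : R, 0 < e &
      forall v, S v -> (d u v < e%:E)%E -> U v.

End Topo.

Definition prod_open {T1 T2 : Type} (S1 : set T1) (O1 : set T1 -> Prop)
    (S2 : set T2) (O2 : set T2 -> Prop) (U : set (T1 * T2)) : Prop :=
  U `<=` S1 `*` S2 /\ forall p, U p -> exists U1 U2,
      [/\ O1 U1, O2 U2, U1 p.1, U2 p.2 & U1 `*` U2 `<=` U].

Definition cont_on {T1 T2 : Type} (S1 : set T1) (O1 : set T1 -> Prop)
    (S2 : set T2) (O2 : set T2 -> Prop) (f : T1 -> T2) : Prop :=
  (forall x, S1 x -> S2 (f x)) /\ forall U, O2 U -> O1 (S1 `&` f @^-1` U).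

Definition homeomorphism {T1 T2 : Type} (S1 : set T1) (O1 : set T1 -> Prop)
    (S2 : set T2) (O2 : set T2 -> Prop) (f : T1 -> T2) : Prop :=
  exists g : T2 -> T1,
    [/\ cont_on S1 O1 S2 O2 f, cont_on S2 O2 S1 O1 g,
        (forall x, S1 x -> g (f x) = x) & (forall y, S2 y -> f (g y) = y)].

(** fiber bundle: E (with topology OE) over base B (topology OB) with fiber E1
    (topology O1); subspaces carry the induced topology, computed by [sub_open] *)
Definition fiber_bundle {TE TB : Type}
    (E : set TE) (OE : set TE -> Prop) (B : set TB) (OB : set TB -> Prop)
    (sub_openE : set TE -> set TE -> Prop) (sub_openB : set TB -> set TB -> Prop)
    (E1 : set TE) (O1 : set TE -> Prop) : Prop :=
  exists pi : TE -> TB,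
    [/\ cont_on E OE B OB pi, (forall b, B b -> exists2 e, E e & pi e = b) &
      forall e, E e -> exists W : set TB,
        [/\ W `<=` B, (exists O, [/\ OB O, O (pi e) & O `<=` W]) &
          exists vt : TE -> TB * TE,
            homeomorphism (E `&` pi @^-1` W) (sub_openE (E `&` pi @^-1` W))
                          (W `*` E1) (prod_open W (sub_openB W) E1 O1) vt /\
            (forall y, (E `&` pi @^-1` W) y -> pi y = (vt y).1)]].

Definition principal_homogeneous {TG TE : Type} (G : set (TG -> TG))
    (E1 : set TE) : Prop :=
  exists act : (TG -> TG) -> TE -> TE,
    [/\ (forall A e, G A -> E1 e -> E1 (act A e)),
        (forall e, E1 e -> act id e = e),
        (forall A B e, G A -> G B -> E1 e -> act (A \o B) e = act A (act B e)),
        (forall e e', E1 e -> E1 e' -> exists2 A, G A & act A e = e') &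
        (forall A B e, G A -> G B -> E1 e -> act A e = act B e -> A = B)].

Arguments distJ {R V} ip {X} f g.
Arguments op_dist {R V} ip A B.

(* Main.v *)
Require Import Defs.
From HB Require Import structures.
From mathcomp Require Import all_boot all_order all_algebra.
From mathcomp Require Import all_classical all_reals all_analysis.
From mathcomp Require Import complex.
From mathcomp Require Import ring lra.
Import Order.TTheory GRing.Theory Num.Theory.
Local Open Scope classical_set_scope.
Local Open Scope ring_scope.

Lemma sqr_le (R : realType) (b s : R) : 0 <= s -> b * b <= s * s -> b <= s.
Proof. move=> hs h; rewrite leNgt; apply/negP => hb. nra. Qed.

Lemma dchoice (R : realType) (e K : R) : 0 < e -> 0 < K ->
  exists2 d, 0 < d & (d <= 1) /\ (d * K <= e / 2).
Proof.
move=> he hK; exists (Num.min 1 (e / (2 * K))).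
  by rewrite lt_min ltr01 /= divr_gt0 // mulr_gt0.
split; first by rewrite ge_min lexx.
have -> : e / 2 = e / (2 * K) * K by field; lra.
by apply: ler_wpM2r; [exact: ltW | rewrite ge_min lexx orbT].
Qed.

Section HN.
Variables (R : realType) (V : lmodType R[i]) (ip : V -> V -> R[i]).
Hypothesis hip : is_inner_product ip.

Lemma ipDl x y z : ip (x + y) z = ip x z + ip y z.
Proof. by case: hip => h _ _ _; rewrite -[x]scale1r h mul1r scale1r. Qed.
Lemma ip0l z : ip 0 z = 0.
Proof. have h := ipDl 0 0 z; rewrite addr0 in h. by apply: (addrI (ip 0 z)); rewrite -h addr0. Qed.
Lemma ipZl a x z : ip (a *: x) z = a * ip x z.
Proof. by case: hip => h _ _ _; rewrite -[a *: x]addr0 h ip0l addr0. Qed.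
Lemma ipNl x z : ip (- x) z = - ip x z.
Proof. by rewrite -scaleN1r ipZl mulN1r. Qed.
Lemma ipC x y : ip y x = conjc (ip x y).
Proof. by case: hip. Qed.
Lemma ipDr x y z : ip z (x + y) = ip z x + ip z y.
Proof. by rewrite ipC ipDl rmorphD /= -!ipC. Qed.
Lemma ipZr a x z : ip z (a *: x) = conjc a * ip z x.
Proof. by rewrite ipC ipZl rmorphM /= -ipC. Qed.
Lemma ipNr x z : ip z (- x) = - ip z x.
Proof. by rewrite ipC ipNl rmorphN /= -ipC. Qed.
Lemma ReD (a b : R[i]) : complex.Re (a + b) = complex.Re a + complex.Re b.
Proof. by case: a b => [? ?] [? ?]. Qed.
Lemma ReJ (a : R[i]) : complex.Re (conjc a) = complex.Re a.
Proof. by case: a. Qed.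
Lemma ReRM (t : R) (a : R[i]) : complex.Re ((t%:C)%C * a) = t * complex.Re a.
Proof. by case: a => ? ? /=; rewrite mul0r subr0. Qed.
Lemma ipxx_ge0 x : 0 <= complex.Re (ip x x).
Proof. by case: hip. Qed.
Lemma hnorm_ge0 x : 0 <= hnorm ip x.
Proof. exact: sqrtr_ge0. Qed.
Lemma hnorm_sqr x : hnorm ip x * hnorm ip x = complex.Re (ip x x).
Proof. by rewrite -expr2 sqr_sqrtr // ipxx_ge0. Qed.
Lemma hnorm0 : hnorm ip 0 = 0.
Proof. by rewrite /hnorm ip0l /= sqrtr0. Qed.
Lemma hnorm_eq0 x : hnorm ip x = 0 -> x = 0.
Proof.
move=> h. case: hip => _ hc _ hz; apply: hz.
have hre : complex.Re (ip x x) = 0.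
  by move/eqP: h; rewrite sqrtr_eq0 => h'; apply/eqP; rewrite eq_le h' ipxx_ge0.
have := hc x x; case: (ip x x) hre => a b /= -> [] hb.
by congr (Complex _ _); lra.
Qed.
Lemma hnormN x : hnorm ip (- x) = hnorm ip x.
Proof. by rewrite /hnorm ipNl ipNr opprK. Qed.
Lemma hnormB x y : hnorm ip (x - y) = hnorm ip (y - x).
Proof. by rewrite -hnormN opprB. Qed.
Lemma hnormZ (c : R) x : 0 <= c -> hnorm ip ((c%:C)%C *: x) = c * hnorm ip x.
Proof.
move=> hc; rewrite /hnorm ipZl ipZr conjc_real mulrA -rmorphM ReRM.
by rewrite sqrtrM ?mulr_ge0 // -expr2 sqrtr_sqr ger0_norm.
Qed.
Lemma Re_ip_expand x y : complex.Re (ip (x + y) (x + y)) =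
  complex.Re (ip x x) + 2 * complex.Re (ip x y) + complex.Re (ip y y).
Proof.
rewrite ipDl !ipDr !ReD [ip y x]ipC ReJ; lra.
Qed.
Lemma CS x y : complex.Re (ip x y) <= hnorm ip x * hnorm ip y.
Proof.
set a := complex.Re (ip x x); set b := complex.Re (ip x y); set c := complex.Re (ip y y).
have q : forall t : R, 0 <= a + 2 * (t * b) + t * (t * c).
  move=> t; have := ipxx_ge0 (x + (t%:C)%C *: y).
  by rewrite Re_ip_expand ipZr conjc_real ReRM ipZl ipZr conjc_real !ReRM.
have ha : 0 <= a by apply: ipxx_ge0.
have hc : 0 <= c by apply: ipxx_ge0.
have hx := hnorm_sqr x; have hy := hnorm_sqr y.
have hx0 := hnorm_ge0 x; have hy0 := hnorm_ge0 y.
case: (leP b 0) => hb; first by nra.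
have hbb : b * b <= a * c.
  case: (eqVneq c 0) => [c0|cn0].
    have := q (- (a + 1) / (2 * b)); rewrite c0 mulr0 mulr0 addr0.
    have -> : 2 * (- (a + 1) / (2 * b) * b) = - (a + 1) by field; lra.
    lra.
  have cp : 0 < c by rewrite lt_def cn0.
  have := q (- b / c).
  have -> : a + 2 * (- b / c * b) + - b / c * (- b / c * c) = (a * c - b * b) / c by field; lra.
  move=> h; have := mulr_ge0 h (ltW cp); rewrite divfK //; lra.
apply: sqr_le; first by nra.
by rewrite mulrACA hx hy.
Qed.
Lemma hnormD x y : hnorm ip (x + y) <= hnorm ip x + hnorm ip y.
Proof.
apply: sqr_le; first by apply: addr_ge0; apply: hnorm_ge0.
rewrite hnorm_sqr Re_ip_expand -hnorm_sqr -(hnorm_sqr y).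
have := CS x y; have := hnorm_ge0 x; have := hnorm_ge0 y; nra.
Qed.
Lemma hnormD3 x y z : hnorm ip (x - z) <= hnorm ip (x - y) + hnorm ip (y - z).
Proof. by have := hnormD (x - y) (y - z); rewrite addrA subrK. Qed.

Lemma lin0 (A : V -> V) : is_linear_op A -> A 0 = 0.
Proof.
move=> h; have := h 1 0 0; rewrite scale1r addr0 scale1r => e.
by apply: (addrI (A 0)); rewrite -e addr0.
Qed.
Lemma linZ (A : V -> V) a x : is_linear_op A -> A (a *: x) = a *: A x.
Proof. by move=> h; rewrite -[a *: x]addr0 h lin0 // addr0. Qed.
Lemma linD (A : V -> V) x y : is_linear_op A -> A (x + y) = A x + A y.
Proof. by move=> h; rewrite -[x]scale1r h !scale1r. Qed.
Lemma linB (A : V -> V) x y : is_linear_op A -> A (x - y) = A x - A y.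
Proof. by move=> h; rewrite linD // -scaleN1r linZ // scaleN1r. Qed.
Lemma lin_sub (A B : V -> V) : is_linear_op A -> is_linear_op B ->
  is_linear_op (fun x => A x - B x).
Proof.
move=> hA hB a x y; rewrite hA hB scalerBr.
by rewrite addrACA opprD.
Qed.
Lemma lin_comp (A B : V -> V) : is_linear_op A -> is_linear_op B -> is_linear_op (A \o B).
Proof. by move=> hA hB a x y /=; rewrite hB hA. Qed.

Definition bnd (A : V -> V) := exists M : R, forall x, hnorm ip (A x) <= M * hnorm ip x.

Lemma bnd_sub (A B : V -> V) : bnd A -> bnd B -> bnd (fun x => A x - B x).
Proof.
move=> [M1 h1] [M2 h2]; exists (M1 + M2) => x.
by have := hnormD (A x) (- B x); rewrite hnormN; have := h1 x; have := h2 x; lra.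
Qed.

Lemma opS_has_sup (A : V -> V) : bnd A -> has_sup [set hnorm ip (A x) | x in [set x | hnorm ip x <= 1]].
Proof.
move=> [M h]; split; first by exists (hnorm ip (A 0)), 0 => //; rewrite /= hnorm0 ler01.
exists `|M| => _ [x Sx <-]; have := h x; have := hnorm_ge0 x.
have := ler_norm M; have := normr_ge0 M; rewrite /= in Sx; nra.
Qed.
Lemma opnorm_ub (A : V -> V) x : bnd A -> hnorm ip x <= 1 -> hnorm ip (A x) <= opnorm ip A.
Proof. by move=> hA hx; have := sup_upper_bound (opS_has_sup _ hA); apply; exists x. Qed.
Lemma opnorm_le (A : V -> V) M : (forall x, hnorm ip x <= 1 -> hnorm ip (A x) <= M) ->
  opnorm ip A <= M.
Proof.
move=> h; apply: ge_sup; first by exists (hnorm ip (A 0)), 0 => //; rewrite /= hnorm0 ler01.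
by move=> _ [x Sx <-]; apply: h.
Qed.
Lemma opnorm_ge0 (A : V -> V) : bnd A -> 0 <= opnorm ip A.
Proof.
move=> hA; apply: le_trans (opnorm_ub _ 0 hA _); first exact: hnorm_ge0.
by rewrite hnorm0 ler01.
Qed.
Lemma opnorm_bound (A : V -> V) v : is_linear_op A -> bnd A ->
  hnorm ip (A v) <= opnorm ip A * hnorm ip v.
Proof.
move=> hl hA; have h0 := opnorm_ge0 _ hA.
case: (eqVneq (hnorm ip v) 0) => [/hnorm_eq0 ->|hn].
  by rewrite lin0 // hnorm0 mulr0.
have tp : 0 < hnorm ip v by rewrite lt_def hn hnorm_ge0.
set t := hnorm ip v in tp hn *.
have ev : v = (t%:C)%C *: ((t^-1%:C)%C *: v).
  by rewrite scalerA -rmorphM /= mulfV // scale1r.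
have hw : hnorm ip ((t^-1%:C)%C *: v) = 1.
  by rewrite hnormZ ?invr_ge0 ?ltW // mulVf.
have hle1 : hnorm ip ((t^-1%:C)%C *: v) <= 1 by rewrite hw.
have hu := opnorm_ub _ ((t^-1%:C)%C *: v) hA hle1.
rewrite {1}ev linZ // (hnormZ _ _ (ltW tp)); nra.
Qed.

Lemma GLH_lb (A : V -> V) : GLH ip A -> is_linear_op A /\ bnd A.
Proof. by case=> [[hl hb] _]. Qed.
Lemma GLH_id : GLH ip id.
Proof.
have b : bounded_op ip (@id V) by split; [by [] | exists 1 => x; rewrite mul1r].
by split=> //; exists id.
Qed.
Lemma bounded_comp (A B : V -> V) : bounded_op ip A -> bounded_op ip B -> bounded_op ip (A \o B).
Proof.
move=> [hA [M1 h1]] [hB [M2 h2]]; split; first exact: lin_comp.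
exists (`|M1| * M2) => x /=; have := h1 (B x); have := h2 x.
have := hnorm_ge0 (B x); have := hnorm_ge0 x; have := ler_norm M1; have := normr_ge0 M1.
have := hnorm_ge0 (A (B x)); nra.
Qed.
Lemma GLH_comp (A B : V -> V) : GLH ip A -> GLH ip B -> GLH ip (A \o B).
Proof.
move=> [bA [A' [bA' c1 c2]]] [bB [B' [bB' d1 d2]]]; split; first exact: bounded_comp.
exists (B' \o A'); split; first exact: bounded_comp.
  by move=> x /=; rewrite c1 d1.
by move=> x /=; rewrite d2 c2.
Qed.
Lemma GLH_inv (A : V -> V) : GLH ip A -> exists B, [/\ GLH ip B, cancel A B & cancel B A].
Proof.
move=> [bA [B [bB c1 c2]]]; exists B; split=> //; split=> //; by exists A.
Qed.

Lemma op_sym (A B : V -> V) : opnorm ip (fun x => A x - B x) = opnorm ip (fun x => B x - A x).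
Proof.
rewrite /opnorm.
have -> : (fun x => hnorm ip (A x - B x)) = (fun x => hnorm ip (B x - A x)).
  by apply: funext => x; exact: hnormB.
by [].
Qed.
Lemma op_zero (A : V -> V) : opnorm ip (fun x => A x - A x) = 0.
Proof.
apply/eqP; rewrite eq_le; apply/andP; split.
  by apply: opnorm_le => x _; rewrite subrr hnorm0.
by apply: opnorm_ge0; exists 0 => x; rewrite subrr hnorm0 mul0r.
Qed.
Lemma op_tri (A B C : V -> V) : bnd (fun x => A x - B x) -> bnd (fun x => B x - C x) ->
  opnorm ip (fun x => A x - C x) <= opnorm ip (fun x => A x - B x) + opnorm ip (fun x => B x - C x).
Proof.
move=> h1 h2; apply: opnorm_le => x hx.
have := hnormD3 (A x) (B x) (C x).
have := opnorm_ub _ x h1 hx; have := opnorm_ub _ x h2 hx; lra.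
Qed.

Lemma ballO (A : V -> V) (d : R) : GLH ip A ->
  metric_open (op_dist ip) (GLH ip) [set B | GLH ip B /\ (op_dist ip A B < d%:E)%E].
Proof.
move=> gA; split; first by move=> B [].
move=> B [gB]; rewrite /op_dist lte_fin => hAB.
exists (d - opnorm ip (fun x => A x - B x)); first by rewrite subr_gt0.
move=> C gC; rewrite /op_dist lte_fin => hBC; split => //.
rewrite lte_fin.
have := op_tri A B C (bnd_sub _ _ (GLH_lb _ gA).2 (GLH_lb _ gB).2) (bnd_sub _ _ (GLH_lb _ gB).2 (GLH_lb _ gC).2).
lra.
Qed.

Section NJ.
Variable X : ptopologicalType.
Local Open Scope ereal_scope.
Lemma nJ_ub (f : X -> V) x : (hnorm ip (f x))%:E <= norm_J ip f.
Proof. by apply: ereal_sup_ubound; exists x. Qed.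
Lemma nJ_le (f : X -> V) M : (forall x, (hnorm ip (f x))%:E <= M) -> norm_J ip f <= M.
Proof. by move=> h; apply: ge_ereal_sup => _ [x _ <-]. Qed.
Lemma nJ_ge0 (f : X -> V) : 0 <= norm_J ip f.
Proof. by apply: le_trans (nJ_ub f point); rewrite lee_fin hnorm_ge0. Qed.
Lemma distJ_refl (f : X -> V) : distJ ip f f = 0.
Proof.
apply/eqP; rewrite eq_le nJ_ge0 andbT; apply: nJ_le => x.
by rewrite subrr hnorm0.
Qed.
Lemma nJ_fin (f : X -> V) : norm_J ip f < +oo -> exists n : R, norm_J ip f = n%:E.
Proof.
move=> h; have hf : norm_J ip f \is a fin_num by rewrite ge0_fin_numE // nJ_ge0.
by exists (fine (norm_J ip f)); rewrite fineK.
Qed.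

Lemma ballJ (S : set (X -> V)) f (d : R) :
  metric_open (distJ ip) S [set g | S g /\ distJ ip f g < d%:E].
Proof.
split; first by move=> g [].
move=> g [Sg hfg].
have [n hn] := nJ_fin _ (lt_trans hfg (ltry d)).
rewrite /distJ hn lte_fin in hfg.
exists ((d - n) / 2)%R; first by rewrite divr_gt0 // subr_gt0.
move=> h Sh hgh; split=> //.
apply: (@le_lt_trans _ _ (n + (d - n) / 2)%:E); last by rewrite lte_fin; lra.
apply: nJ_le => x; rewrite lee_fin.
have h1 := nJ_ub (fun x => (f x - g x)%R) x; rewrite hn lee_fin /= in h1.
have h2 := le_lt_trans (nJ_ub (fun x => (g x - h x)%R) x) hgh; rewrite lte_fin /= in h2.
have := hnormD3 (f x) (g x) (h x); lra.
Qed.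

Lemma zeta_cont (A : V -> V) (f0 : X -> V) (e : R) : is_linear_op A -> bnd A ->
  norm_J ip f0 < +oo -> (0 < e)%R -> exists2 d : R, (0 < d)%R &
  forall (A' : V -> V) (f0' : X -> V), is_linear_op A' -> bnd A' ->
    op_dist ip A A' < d%:E -> distJ ip f0 f0' < d%:E ->
    distJ ip (opact A f0) (opact A' f0') < e%:E.
Proof.
move=> lA bA hf0 he; have [n hn] := nJ_fin _ hf0.
have n0 : (0 <= n)%R by rewrite -lee_fin -hn nJ_ge0.
set a := opnorm ip A; have a0 : (0 <= a)%R by apply: opnorm_ge0.
set K := (n + a + 1)%R; have K0 : (0 < K)%R by rewrite /K; lra.
have [d d0 [d1 dK]] := dchoice _ _ _ he K0.
exists d => // A' f0' lA' bA' hAA' hff.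
rewrite /op_dist lte_fin in hAA'.
set o := opnorm ip (fun x => (A x - A' x)%R) in hAA'.
have bd : bnd (fun x => (A x - A' x)%R) by apply: bnd_sub.
have o0 : (0 <= o)%R by apply: opnorm_ge0.
apply: (@le_lt_trans _ _ (e / 2)%:E); last by rewrite lte_fin; lra.
apply: nJ_le => x; rewrite lee_fin /opact.
set u := f0 x; set w := f0' x.
have hu : (hnorm ip u <= n)%R by rewrite -lee_fin -hn; apply: nJ_ub.
have hh : (hnorm ip (u - w) < d)%R.
  by rewrite -lte_fin; apply: le_lt_trans hff; apply: (nJ_ub (fun x => (f0 x - f0' x)%R)).
set h := hnorm ip (u - w) in hh.
have h0 : (0 <= h)%R by apply: hnorm_ge0.
have t1 := hnormD3 (A u) (A' u) (A' w).
have t2 : (hnorm ip (A u - A' u) <= o * hnorm ip u)%R.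
  by apply: (opnorm_bound (fun x => (A x - A' x)%R)) => //; apply: lin_sub.
have t3 : (hnorm ip (A' u - A' w) <= a * h + o * h)%R.
  rewrite -linB // /h.
  have t5 := hnormD (A (u - w)%R) (A' (u - w) - A (u - w))%R.
  rewrite addrC subrK hnormB in t5.
  have t6 := opnorm_bound A (u - w)%R lA bA.
  have t7 := opnorm_bound (fun x => (A x - A' x)%R) (u - w)%R (lin_sub _ _ lA lA') bd.
  rewrite /= -/a -/o in t6 t7; lra.
have hu0 := hnorm_ge0 u.
have : (o * hnorm ip u <= d * n)%R by nra.
have : (a * h + o * h <= a * d + d)%R by nra.
rewrite /K in dK; nra.
Qed.
End NJ.
End HN.

Lemma cont_swap_dom {T1 T2 T : Type} (S1 : set T1) O1 (S2 : set T2) O2 (ST : set T) OT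
  (f : T1 * T2 -> T) :
  cont_on (S1 `*` S2) (prod_open S1 O1 S2 O2) ST OT f ->
  cont_on (S2 `*` S1) (prod_open S2 O2 S1 O1) ST OT (fun p => f (p.2, p.1)).
Proof.
move=> [hm ho]; split; first by move=> [a b] [/= ha hb]; apply: hm.
move=> U /ho [sub hp]; split; first by move=> [a b] [[/= ha hb] _].
move=> [b a] [[/= hb ha] hU].
have [W1 [W2 [p1 p2 q1 q2 hs]]] := hp (a, b) (conj (conj ha hb) hU).
exists W2, W1; split => //.
move=> [y x] [/= hy hx]; have := hs (x, y) (conj hx hy); case=> [[? ?] ?]; split => //.
Qed.

Lemma cont_swap_cod {T T1 T2 : Type} (ST : set T) OT (S1 : set T1) O1 (S2 : set T2) O2
  (g : T -> T1 * T2) :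
  cont_on ST OT (S1 `*` S2) (prod_open S1 O1 S2 O2) g ->
  cont_on ST OT (S2 `*` S1) (prod_open S2 O2 S1 O1) (fun y => ((g y).2, (g y).1)).
Proof.
move=> [hm ho]; split; first by move=> y /hm [? ?].
move=> W [sub hp].
have hW' : prod_open S1 O1 S2 O2 [set p | W (p.2, p.1)].
  split; first by move=> [a b] /sub [].
  move=> [a b] /= hw; have [W2 [W1 [p2 p1 q2 q1 hs]]] := hp (b, a) hw.
  by exists W1, W2; split => // [[x y]] [/= hx hy]; exact: (hs (y, x)).
exact: (ho _ hW').
Qed.

Theorem mainTheorem10 (R : realType) (V : lmodType R[i]) (ip : V -> V -> R[i])
  (X : ptopologicalType) (mu : {measure set (g_sigma_algebraType (@open X)) -> \bar R})
  (Fb0 : set (X -> V)) (f10 : X -> V)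
  (zinv : (X -> V) -> (V -> V) * (X -> V)) :
  separable_hilbert ip ->
  locally_compact [set: X] ->
  is_F0_transversal ip mu Fb0 ->
  Fb0 f10 ->
  (* zeta (A, f) = A f is a bijection GLH(H) x Fb0 -> F, with inverse zinv *)
  (forall p, (GLH ip `*` Fb0) p ->
     Fset ip mu (opact p.1 p.2) /\ zinv (opact p.1 p.2) = p) ->
  (forall f, Fset ip mu f -> (GLH ip `*` Fb0) (zinv f) /\ opact (zinv f).1 (zinv f).2 = f) ->
  (* zeta^{-1} is continuous *)
  cont_on (Fset ip mu) (metric_open (distJ ip) (Fset ip mu))
          (GLH ip `*` Fb0)
          (prod_open (GLH ip) (metric_open (op_dist ip) (GLH ip))
                     Fb0 (metric_open (distJ ip) Fb0))
          zinv ->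
  let F1 := [set opact A f10 | A in GLH ip] in
  let theta := fun f : X -> V => (zinv f).1 in
  let theta_star := fun p : (X -> V) * (X -> V) => opact (theta p.1) p.2 in
  [/\ homeomorphism (F1 `*` Fb0)
        (prod_open F1 (metric_open (distJ ip) F1) Fb0 (metric_open (distJ ip) Fb0))
        (Fset ip mu) (metric_open (distJ ip) (Fset ip mu)) theta_star,
      fiber_bundle (Fset ip mu) (metric_open (distJ ip) (Fset ip mu))
        Fb0 (metric_open (distJ ip) Fb0)
        (metric_open (distJ ip)) (metric_open (distJ ip))
        F1 (metric_open (distJ ip) F1) &
      principal_homogeneous (GLH ip) F1].
Proof.
move=> [hip _ _] _ [hsub _] f10b hz1 hz2 [_ hc] F1 theta theta_star.
have fin0 : forall f, Fb0 f -> (norm_J ip f < +oo)%E by move=> f /hsub [].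
have GLHlb := @GLH_lb R V ip.
have GLHcomp := @GLH_comp R V ip.
have GLHinv := @GLH_inv R V ip.
have GLHid := @GLH_id R V ip.
have ballJ' := @ballJ R V ip hip X.
have zc := @zeta_cont R V ip hip X.
have dref := @distJ_refl R V ip hip X.
have opz := @op_zero R V ip hip.
have bO := @ballO R V ip hip.
have Fb0open : metric_open (distJ ip) Fb0 Fb0.
  by split => // u _; exists 1 => // v hv _.
have F1F : forall f, F1 f -> Fset ip mu f.
  by move=> _ [A gA <-]; have [] := hz1 (A, f10) (conj gA f10b).
have thF1 : forall A, GLH ip A -> theta (opact A f10) = A.
  by move=> A gA; rewrite /theta (hz1 (A, f10) (conj gA f10b)).2.
have thG : forall f, Fset ip mu f -> GLH ip (theta f).
  by move=> f /hz2 [[? _] _].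
have near : forall f (d : R) (O2 : set (X -> V)), Fset ip mu f -> (0 < d)%R ->
   metric_open (distJ ip) Fb0 O2 -> O2 (zinv f).2 ->
   exists2 e : R, (0 < e)%R & forall f', Fset ip mu f' -> (distJ ip f f' < e%:E)%E ->
     (op_dist ip (zinv f).1 (zinv f').1 < d%:E)%E /\ O2 (zinv f').2.
  move=> f d O2 Ff d0 hO2 o2f.
  have [[gA _] _] := hz2 f Ff.
  set U := [set p : (V -> V) * (X -> V) |
    (GLH ip p.1 /\ (op_dist ip (zinv f).1 p.1 < d%:E)%E) /\ O2 p.2].
  have hU : prod_open (GLH ip) (metric_open (op_dist ip) (GLH ip)) Fb0
      (metric_open (distJ ip) Fb0) U.
    split; first by move=> p [[g1 _] o]; split => //; apply: hO2.1.
    move=> p [b1 b2].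
    exists [set B | GLH ip B /\ (op_dist ip (zinv f).1 B < d%:E)%E], O2; split => //.
    exact: bO.
  have [_ hU'] := hc U hU.
  have inU : U (zinv f).
    by split => //; split => //; rewrite /op_dist opz lte_fin.
  have [e e0 he] := hU' f (conj Ff inU).
  exists e => // f' Ff' hff'.
  by have [_ [[_ h1] h2]] := he f' Ff' hff'.
pose g := fun f : X -> V => (opact (zinv f).1 f10, (zinv f).2).
have contts : cont_on (F1 `*` Fb0)
    (prod_open F1 (metric_open (distJ ip) F1) Fb0 (metric_open (distJ ip) Fb0))
    (Fset ip mu) (metric_open (distJ ip) (Fset ip mu)) theta_star.
  split.
    move=> [f1 f0] [/= h1 h0].
    by have [] := hz1 (theta f1, f0) (conj (thG f1 (F1F f1 h1)) h0).
  move=> U [Usub hU]; split; first by move=> p [].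
  move=> [f1 f0] [[/= h1 h0] hUp].
  have gA := thG f1 (F1F _ h1).
  have [eps eps0 heps] := hU _ hUp.
  have [d d0 hd] := zc (theta f1) f0 eps (GLHlb _ gA).1 (GLHlb _ gA).2 (fin0 _ h0) eps0.
  have [e e0 he] := near f1 d Fb0 (F1F _ h1) d0 Fb0open (hz2 f1 (F1F _ h1)).1.2.
  exists [set g | F1 g /\ (distJ ip f1 g < e%:E)%E],
         [set g | Fb0 g /\ (distJ ip f0 g < d%:E)%E]; split.
  - exact: ballJ'.
  - exact: ballJ'.
  - by split => //; rewrite dref lte_fin.
  - by split => //; rewrite dref lte_fin.
  move=> [g1 g0] [/= [hg1 hd1] [hg0 hd0]].
  split; first by split.
  have [hop _] := he g1 (F1F _ hg1) hd1.
  have gB := thG g1 (F1F _ hg1).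
  have hdist := hd (theta g1) g0 (GLHlb _ gB).1 (GLHlb _ gB).2 hop hd0.
  apply: heps => //.
  exact: (hz1 (theta g1, g0) (conj gB hg0)).1.
have contg : cont_on (Fset ip mu) (metric_open (distJ ip) (Fset ip mu)) (F1 `*` Fb0)
    (prod_open F1 (metric_open (distJ ip) F1) Fb0 (metric_open (distJ ip) Fb0)) g.
  split.
    move=> f Ff; have [[gA h0] _] := hz2 f Ff; split => //=.
    by exists (zinv f).1.
  move=> W [Wsub hW]; split; first by move=> f [].
  move=> f [Ff hWf].
  have [W1 [W2 [p1 p2 q1 q2 hs]]] := hW _ hWf.
  have [[gA h0] _] := hz2 f Ff.
  have [eps eps0 heps] := p1.2 _ q1.
  have [d d0 hd] := zc (zinv f).1 f10 eps (GLHlb _ gA).1 (GLHlb _ gA).2 (fin0 _ f10b) eps0.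
  have [e e0 he] := near f d W2 Ff d0 p2 q2.
  exists e => // f' Ff' hff'; split => //.
  have [hop hW2] := he f' Ff' hff'.
  have [[gB _] _] := hz2 f' Ff'.
  apply: hs; split => /=; last exact: hW2.
  apply: heps; first by exists (zinv f').1.
  apply: hd => //; [exact: (GLHlb _ gB).1 | exact: (GLHlb _ gB).2 | by rewrite dref lte_fin].
have inv1 : forall p, (F1 `*` Fb0) p -> g (theta_star p) = p.
  move=> [f1 f0] [/= [A gA <-] h0].
  rewrite /theta_star /= thF1 // /g.
  by rewrite (hz1 (A, f0) (conj gA h0)).2.
have inv2 : forall f, Fset ip mu f -> theta_star (g f) = f.
  move=> f Ff; rewrite /theta_star /g /= thF1; first exact: (hz2 f Ff).2.
  exact: (hz2 f Ff).1.1.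
split.
- by exists g; split.
- exists (fun f => (zinv f).2); split.
  + split; first by move=> f /hz2 [[]].
    move=> U hUo; split; first by move=> f [].
    move=> f [Ff hUf]; have [e e0 he] := near f 1%R U Ff ltr01 hUo hUf.
    by exists e => // f' Ff' hff'; split => //; exact: (he f' Ff' hff').2.
  + move=> b hb; exists (opact id b); first exact: (hz1 (id, b) (conj GLHid hb)).1.
    by rewrite (hz1 (id, b) (conj GLHid hb)).2.
  + move=> e Fe; exists Fb0; split => //.
      by exists Fb0; split => //; exact: (hz2 e Fe).1.2.
    exists (fun y => ((g y).2, (g y).1)); split; last by [].
    have -> : Fset ip mu `&` (fun f => (zinv f).2) @^-1` Fb0 = Fset ip mu.
      apply/seteqP; split; first by move=> f [].
      by move=> f Ff; split => //; exact: (hz2 f Ff).1.2.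
    exists (fun p => theta_star (p.2, p.1)); split.
    * exact: cont_swap_cod contg.
    * exact: cont_swap_dom contts.
    * by move=> y Fy; exact: inv2.
    * move=> [b f1] [hb hf1].
      move: (inv1 (f1, b) (conj hf1 hb)).
      by case: (g (theta_star (f1, b))) => u v [-> ->].
- exists (fun A e => opact A e); split.
  + by move=> A e gA [B gB <-]; exists (A \o B); [exact: GLHcomp | by []].
  + by move=> e _; apply: funext.
  + by [].
  + move=> e e' [B gB <-] [C gC <-].
    have [Bi [gBi c1 c2]] := GLHinv _ gB.
    exists (C \o Bi); first exact: GLHcomp.
    by apply: funext => x; rewrite /opact /= c1.
  + move=> A B e gA gB [C gC <-] hAB.
    have h1 := (hz1 (A \o C, f10) (conj (GLHcomp _ _ gA gC) f10b)).2.
    have h2 := (hz1 (B \o C, f10) (conj (GLHcomp _ _ gB gC) f10b)).2.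
    have hABC : opact (A \o C) f10 = opact (B \o C) f10 := hAB.
    rewrite hABC h2 in h1; case: h1 => hBA.
    have [Ci [gCi d1 d2]] := GLHinv _ gC.
    apply: funext => x; rewrite -(d2 x).
    exact: (congr1 (fun F => F (Ci x)) (esym hBA)).
Qed.
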